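(* Consider an instance of the periodic lock scheduling problem with exactly two streams, one downstream with offset $\mu_D$ and periodicity $\lambda_D\ge2$, and one upstream with offset $\mu_U$ and periodicity $\lambda_U\ge2$. Let $\Lambda=\operatorname{lcm}(\lambda_D,\lambda_U)$. Then for any optimal schedule $\sigma$, $$C_{\mathrm{avg},\sigma}\ge\begin{cases}\frac1\Lambda & \text{if } \mu_U-\mu_D\equiv0\pmod{\gcd(\lambda_D,\lambda_U)},\\ 0&\text{otherwise.}\end{cases}$$
   Context: Periodic lock scheduling problem. Time is discrete, periods $t=1,2,\dots$. Each stream $i$ has a direction $\delta_i\in\{D,U\}$, an integer periodicity $\lambda_i\ge1$ and an integer offset $1\le\mu_i\le\lambda_i$; $a_i(t)=1$ if $t\equiv\mu_i\pmod{\lambda_i}$ and $0$ otherwise, $a_\delta(t)=\sum_{i:\delta_i=\delta}a_i(t)$. A schedule is a sequence $\sigma=(\sigma(t))_{t\ge1}$ with $\sigma(t)\in\{D,U,W\}$ ($D$: process downstream waiting vessels and switch alignment from downstream to upstream; $U$ symmetrically; $W$: wait); the initial orientation is arbitrary; it is feasible if the non-$W$ actions alternate between $D$ and $U$. Queue lengths: $n_D(0)=n_U(0)=0$ and for $t\ge1$, $n_\delta(t)=0$ if $\sigma(t)=\delta$ and $n_\delta(t)=n_\delta(t-1)+a_\delta(t)$ otherwise. $C_\sigma(t)=n_D(t)+n_U(t)$ and $C_{\mathrm{avg},\sigma}=\lim_{T\to\infty}\frac1T\sum_{t=1}^TC_\sigma(t)$. A schedule is optimal if it is feasible and minimizes $C_{\mathrm{avg},\sigma}$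 over all feasible schedules. *)

(* Defs.v *)
From Stdlib Require Import Reals Lia Arith List.
Open Scope R_scope.

Inductive dir := D | U.
Inductive action := ActD | ActU | ActW.

Record stream := mkStream { sdir : dir; slam : nat; smu : nat }.

Definition valid_stream (s : stream) : Prop :=
  (1 <= slam s)%nat /\ (1 <= smu s <= slam s)%nat.

Definition arr (s : stream) (t : nat) : nat :=
  if Nat.eqb (t mod slam s) (smu s mod slam s) then 1%nat else 0%nat.

Definition dir_eqb (d1 d2 : dir) : bool :=
  match d1, d2 with D, D | U, U => true | _, _ => false end.

Definition arr_dir (L : list stream) (d : dir) (t : nat) : nat :=
  fold_right (fun s acc => ((if dir_eqb (sdir s) d then arr s t else 0) + acc)%nat) 0%nat L.

(* schedules are sigma : nat -> action, only sigma t for t >= 1 matters *)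
Definition schedule := nat -> action.

Definition act_of_dir (d : dir) : action := match d with D => ActD | U => ActU end.

Definition feasible (sigma : schedule) : Prop :=
  forall t1 t2 : nat, (1 <= t1 < t2)%nat ->
    sigma t1 <> ActW -> sigma t2 <> ActW ->
    (forall t, (t1 < t < t2)%nat -> sigma t = ActW) ->
    sigma t1 <> sigma t2.

Fixpoint queue (L : list stream) (sigma : schedule) (d : dir) (t : nat) : nat :=
  match t with
  | O => O
  | S t' => if (match sigma t, d with ActD, D | ActU, U => true | _, _ => false end)
             then O else (queue L sigma d t' + arr_dir L d t)%nat
  end.

Definition cost (L : list stream) (sigma : schedule) (t : nat) : nat :=
  (queue L sigma D t + queue L sigma U t)%nat.

Fixpoint cum_cost (L : list stream) (sigma : schedule) (T : nat) : nat :=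
  match T with O => O | S T' => (cum_cost L sigma T' + cost L sigma T)%nat end.

Definition avg_cost (L : list stream) (sigma : schedule) (T : nat) : R :=
  INR (cum_cost L sigma T) / INR T.

Definition has_avg_cost (L : list stream) (sigma : schedule) (c : R) : Prop :=
  Un_cv (avg_cost L sigma) c.

Definition optimal (L : list stream) (sigma : schedule) (c : R) : Prop :=
  feasible sigma /\ has_avg_cost L sigma c /\
  forall sigma' c', feasible sigma' -> has_avg_cost L sigma' c' -> c <= c'.

(* Main.v *)
Require Import Defs.
From Stdlib Require Import Reals Lia Lra Arith List.
Open Scope R_scope.

Lemma nat_unbounded (x : R) : exists n : nat, INR n > x.
Proof.
  destruct (archimed x) as [H _].
  exists (Z.to_nat (up x)). rewrite INR_IZR_INZ.
  assert (up x <= Z.of_nat (Z.to_nat (up x)))%Z by lia.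
  apply IZR_le in H0. lra.
Qed.

Lemma lim_lb (u : nat -> R) c B K : Un_cv u c -> 0 <= K ->
  (forall n, (1 <= n)%nat -> u n >= B - K / INR n) -> c >= B.
Proof.
  intros Hc HK Hu.
  destruct (Rge_dec c B) as [|Hlt]; [assumption|exfalso].
  set (e := B - c). assert (He : e > 0) by (unfold e; lra).
  destruct (Hc (e/2)) as [N HN]; [lra|].
  destruct (nat_unbounded (2 * K / e)) as [M HM].
  set (n := (N + M + 1)%nat).
  assert (Hn1 : (1 <= n)%nat) by (unfold n; lia).
  assert (HnN : (n >= N)%nat) by (unfold n; lia).
  specialize (HN n HnN). specialize (Hu n Hn1).
  unfold R_dist in HN. apply Rabs_def2 in HN. destruct HN as [HN1 HN2].
  assert (HnM : INR n > 2 * K / e).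
  { assert (INR M <= INR n) by (apply le_INR; unfold n; lia). lra. }
  assert (Hnpos : INR n > 0) by (apply lt_0_INR; lia).
  assert (K / INR n < e / 2).
  { apply (Rmult_lt_reg_r (INR n)); [lra|].
    unfold Rdiv. rewrite Rmult_assoc, Rinv_l by lra.
    assert (2 * K / e * e < INR n * e) by (apply Rmult_lt_compat_r; lra).
    unfold Rdiv in H. rewrite Rmult_assoc, Rinv_l in H by lra. lra. }
  unfold e in *. lra.
Qed.

Section Main.
Variables (lamD muD lamU muU : nat) (sigma : schedule).
Let L := mkStream D lamD muD :: mkStream U lamU muU :: nil.

Lemma cum_S (L0 : list stream) T : cum_cost L0 sigma (S T) = (cum_cost L0 sigma T + cost L0 sigma (S T))%nat.
Proof. reflexivity. Qed.

Lemma cum_mono (L0 : list stream) m k : (cum_cost L0 sigma m <= cum_cost L0 sigma (m + k))%nat.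
Proof.
  induction k. rewrite Nat.add_0_r; lia.
  rewrite Nat.add_succ_r, cum_S. lia.
Qed.

Lemma cost_ge1 t : (1 <= t)%nat -> t mod lamD = muD mod lamD -> t mod lamU = muU mod lamU ->
  (1 <= cost L sigma t)%nat.
Proof.
  intros Ht HD HU. destruct t as [|t']; [lia|].
  unfold cost, L. simpl queue. unfold arr_dir, arr. simpl.
  rewrite HD, HU, !Nat.eqb_refl.
  destruct (sigma (S t')); lia.
Qed.
End Main.

Theorem lemma8 (lamD muD lamU muU : nat) (sigma : schedule) (c : R) :
  (2 <= lamD)%nat -> (1 <= muD <= lamD)%nat ->
  (2 <= lamU)%nat -> (1 <= muU <= lamU)%nat ->
  optimal (mkStream D lamD muD :: mkStream U lamU muU :: nil) sigma c ->
  c >= (if Nat.eqb (muU mod Nat.gcd lamD lamU) (muD mod Nat.gcd lamD lamU)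
        then 1 / INR (Nat.lcm lamD lamU) else 0).
Proof.
  intros HlD HmD HlU HmU [_ [Hc _]].
  set (L := mkStream D lamD muD :: mkStream U lamU muU :: nil) in *.
  destruct (Nat.eqb_spec (muU mod Nat.gcd lamD lamU) (muD mod Nat.gcd lamD lamU)) as [Heq|Hne].
  2:{ apply (lim_lb _ c 0 0 Hc); [lra|]. intros n Hn.
      assert (INR n > 0) by (apply lt_0_INR; lia).
      unfold avg_cost. unfold Rdiv. rewrite Rmult_0_l, Rminus_0_r.
      apply Rle_ge, Rmult_le_pos; [apply pos_INR|]. apply Rlt_le, Rinv_0_lt_compat; lra. }
  set (g := Nat.gcd lamD lamU) in *.
  assert (Hg : g <> 0%nat) by (unfold g; rewrite Nat.gcd_eq_0; lia).
  destruct (Nat.gcd_bezout_pos lamD lamU) as [a [b Hab]]; [lia|]. fold g in Hab.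
  destruct (Nat.gcd_divide_r lamD lamU) as [z Hz]. fold g in Hz.
  destruct z as [|z']; [lia|].
  pose proof (Nat.div_mod muU g Hg) as EU. pose proof (Nat.div_mod muD g Hg) as ED.
  set (qU := (muU / g)%nat) in *. set (qD := (muD / g)%nat) in *. set (r := (muD mod g)%nat) in *.
  rewrite Heq in EU.
  set (m := (qU + qD * z')%nat).
  set (t0 := (muD + (a * m) * lamD)%nat).
  assert (Ht0U : t0 = (muU + (m * b + qD) * lamU)%nat).
  { unfold t0. rewrite Nat.mul_comm with (n := a), <- Nat.mul_assoc, Hab, Hz.
    rewrite EU, ED at 1. unfold m. ring. }
  assert (HD : t0 mod lamD = muD mod lamD) by (unfold t0; apply Nat.Div0.mod_add).
  assert (HU : t0 mod lamU = muU mod lamU) by (rewrite Ht0U; apply Nat.Div0.mod_add).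
  set (Lam := Nat.lcm lamD lamU) in *.
  assert (HLam : Lam <> 0%nat) by (unfold Lam; rewrite Nat.lcm_eq_0; lia).
  destruct (Nat.divide_lcm_l lamD lamU) as [xD HxD]. fold Lam in HxD.
  destruct (Nat.divide_lcm_r lamD lamU) as [xU HxU]. fold Lam in HxU.
  assert (Hk : forall k, (S k <= cum_cost L sigma (t0 + k * Lam))%nat).
  { induction k.
    - assert (Ht1 : (1 <= t0)%nat) by (unfold t0; lia).
      destruct t0 as [|t0']; [lia|]. rewrite Nat.mul_0_l, Nat.add_0_r, cum_S.
      pose proof (cost_ge1 lamD muD lamU muU sigma (S t0') Ht1 HD HU). unfold L. lia.
    - assert (E : (t0 + S k * Lam = S (t0 + k * Lam + (Lam - 1)))%nat) by lia.
      rewrite E, cum_S.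
      pose proof (cum_mono sigma L (t0 + k * Lam) (Lam - 1)).
      rewrite <- E.
      assert (1 <= cost L sigma (t0 + S k * Lam))%nat.
      { apply cost_ge1; [lia| |].
        - rewrite HxD, Nat.mul_assoc. rewrite Nat.Div0.mod_add. exact HD.
        - rewrite HxU, Nat.mul_assoc. rewrite Nat.Div0.mod_add. exact HU. }
      unfold L in *. lia. }
  assert (Hb : forall n, (n <= Lam * cum_cost L sigma n + t0)%nat).
  { intro n. destruct (Nat.lt_ge_cases n t0); [lia|].
    set (k := ((n - t0) / Lam)%nat).
    pose proof (Nat.div_mod (n - t0) Lam HLam) as Edm. fold k in Edm.
    pose proof (Nat.mod_upper_bound (n - t0) Lam HLam).
    pose proof (cum_mono sigma L (t0 + k * Lam) (n - t0 - k * Lam)) as Hm.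
    replace (t0 + k * Lam + (n - t0 - k * Lam))%nat with n in Hm by nia.
    specialize (Hk k). unfold L in *. nia. }
  apply (lim_lb _ c _ (INR t0 / INR Lam) Hc).
  { unfold Rdiv. apply Rmult_le_pos; [apply pos_INR|]. apply Rlt_le, Rinv_0_lt_compat, lt_0_INR; lia. }
  intros n Hn. specialize (Hb n).
  assert (Hn' : INR n > 0) by (apply lt_0_INR; lia).
  assert (HL' : INR Lam > 0) by (apply lt_0_INR; lia).
  apply le_INR in Hb. rewrite plus_INR, mult_INR in Hb.
  unfold avg_cost. fold L.
  set (C := INR (cum_cost L sigma n)) in *.
  apply Rle_ge.
  replace (1 / INR Lam - INR t0 / INR Lam / INR n) with ((INR n - INR t0) / (INR Lam * INR n)) by (field; lra).
  replace (C / INR n) with ((INR Lam * C) / (INR Lam * INR n)) by (field; lra).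
  unfold Rdiv. apply Rmult_le_compat_r; [|lra].
  apply Rlt_le, Rinv_0_lt_compat, Rmult_lt_0_compat; lra.
Qed.
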